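(* (i) Let $p_{1}, p_{2}, m, r \in \mathbb N$. Then \begin{align*} T(p_{1},p_{2},m,1,r,0) &=\sum_{i=2}^{m}\frac{(-1)^{m-i}}{r^{m-i+1}}S_{p_{1},p_{2},i}^{+,+,+} +\frac{(-1)^{m-1}}{r^{m}}\left(S_{p_{1},p_{2}+1}^{+,+}+S_{p_{2},p_{1}+1}^{+,+}\right) -\frac{(-1)^{m-1}}{r^{m}}\zeta(p_{1}+p_{2}+1)\\ &\quad +\frac{(-1)^{m-1}}{r^{m}}\sum_{b=1}^{r-1}S(p_{1},p_{2},1,b,0) +\frac{(-1)^{m-1}}{r^{m}}\left(\sum_{b=1}^{r-1}S(p_{2},p_{1},1,b,0) -\sum_{b=1}^{r-1}S(0,p_{1}+p_{2}+1,1,b,0)\right). \end{align*} (ii) Let $p_{1}, m, r \in \mathbb N$, $p_{2} \in \mathbb N_{0}$ with $m \geq p_{2}+2$. Then \begin{align*} T(p_{1},-p_{2},m,1,r,0)=\frac{1}{p_{2}+1}\sum_{\ell=0}^{p_{2}} \binom{p_{2}+1}{\ell}B_{\ell}^{+}S(p_{1},m-p_{2}-1+\ell,1,r,0)\,. \end{align*} (iii) Let $m, r \in \mathbb N$, $p_{1}, p_{2} \in \mathbb N_{0}$ with $m \geq p_{1}+p_{2}+3$. Then \begin{align*} T(-p_{1},-p_{2},m,1,r,0)=\frac{1}{(p_{1}+1)(p_{2}+1)}\sum_{\ell_{1}=0}^{p_{1}} \sum_{\ell_{2}=0}^{p_{2}} \binom{p_{1}+1}{\ell_{1}}\binom{p_{2}+1}{\ell_{2}}B_{\ell_{1}}^{+}B_{\ell_{2}}^{+}\,S(0,m-p_{1}-p_{2}-1+\ell_{1}+\ell_{2},1,r,0)\,.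 \end{align*}
   Context: $H_n^{(q)}=\sum_{j=1}^n j^{-q}$ for $q\in\mathbb N$; for an integer $q\ge0$, $H_n^{(-q)}=\sum_{\ell=1}^n\ell^q$ (so $H_n^{(0)}=n$). For $q,q_1,q_2\in\mathbb Z$ and $m,t,r\in\mathbb N$: $S(q,m,t,r,0):=\sum_{n=1}^\infty\frac{H_n^{(q)}}{n^{m}(n+r)^{t}}$ and $T(q_{1},q_{2},m,t,r,0):=\sum_{n=1}^\infty\frac{H_n^{(q_{1})}H_n^{(q_{2})}}{n^{m}(n+r)^{t}}$. $S_{p,q}^{+,+}:=\sum_{n\ge1} H_n^{(p)}/n^q$ and $S_{p_1,p_2,q}^{+,+,+}:=\sum_{n\ge1} H_n^{(p_1)}H_n^{(p_2)}/n^q$. Bernoulli numbers $B_j^{+}$: $\frac{x}{1-e^{-x}}=\sum_{j\ge0}B_j^{+}\frac{x^j}{j!}$. Empty sums are $0$. *)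

(* Defs.v *)
From Stdlib Require Import Reals Lra Lia ZArith List.
From Coquelicot Require Import Coquelicot.
Open Scope R_scope.

(* Finite sum  sum_{k=a}^{b} f k  (empty, i.e. 0, when b < a). *)
Definition fsum (a b : nat) (f : nat -> R) : R :=
  fold_right Rplus 0 (map f (seq a (S b - a))).

Definition sum1 (f : nat -> R) : R := Series (fun k => f (S k)).
Definition ex_sum1 (f : nat -> R) : Prop := ex_series (fun k => f (S k)).

(* Generalized harmonic number H_n^{(q)}, q : Z.
   For q > 0: sum_{j=1}^n j^{-q};  for q = -q' <= 0: sum_{l=1}^n l^{q'}
   (so H_n^{(0)} = n).  Both are sum_{j=1}^n j^{-q}. *)
Definition H (n : nat) (q : Z) : R :=
  fsum 1 n (fun j => powerRZ (INR j) (- q)).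

(* Summand and value of S(q,m,t,r,0) = sum_{n>=1} H_n^{(q)} / (n^m (n+r)^t). *)
Definition Sterm (q : Z) (m t r : nat) (n : nat) : R :=
  H n q / (INR n ^ m * (INR n + INR r) ^ t).
Definition Ssum (q : Z) (m t r : nat) : R := sum1 (Sterm q m t r).

Definition Tterm (q1 q2 : Z) (m t r : nat) (n : nat) : R :=
  H n q1 * H n q2 / (INR n ^ m * (INR n + INR r) ^ t).
Definition Tsum (q1 q2 : Z) (m t r : nat) : R := sum1 (Tterm q1 q2 m t r).

Definition ES2 (p q : nat) : R :=
  sum1 (fun n => H n (Z.of_nat p) / INR n ^ q).
Definition ES3 (p1 p2 q : nat) : R :=
  sum1 (fun n => H n (Z.of_nat p1) * H n (Z.of_nat p2) / INR n ^ q).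

Definition zeta (s : nat) : R := sum1 (fun n => / INR n ^ s).

(* Bernoulli numbers B_j^+ via their generating function
   x / (1 - e^{-x}) = sum_j B_j^+ x^j / j!, i.e. B_j^+ is the j-th derivative
   at 0 of this function (with its removable singularity at 0 filled by 1). *)
Definition bern_gf (x : R) : R := if Req_EM_T x 0 then 1 else x / (1 - exp (- x)).
Definition Bplus (j : nat) : R := Derive_n bern_gf j 0.

(* Main.v *)
Require Import Defs.
From Stdlib Require Import Reals Lra Lia ZArith List.
From Coquelicot Require Import Coquelicot.
Open Scope R_scope.

Definition L (f : nat -> R) a n := fold_right Rplus 0 (map f (seq a n)).

Lemma L_S f n : forall a, L f a (S n) = L f a n + f (a + n)%nat.
Proof.
  induction n; intros a.
  - unfold L; simpl. rewrite Nat.add_0_r; ring.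
  - unfold L in *. change (f a + fold_right Rplus 0 (map f (seq (S a) (S n))) =
      f a + fold_right Rplus 0 (map f (seq (S a) n)) + f (a + S n)%nat).
    rewrite IHn. replace (S a + n)%nat with (a + S n)%nat by lia. ring.
Qed.

Lemma fsum_empty a b f : (b < a)%nat -> fsum a b f = 0.
Proof. intros H. unfold fsum. replace (S b - a)%nat with 0%nat by lia. reflexivity. Qed.

Lemma fsum_Sr a b f : (a <= S b)%nat -> fsum a (S b) f = fsum a b f + f (S b).
Proof.
  intros H. unfold fsum. replace (S (S b) - a)%nat with (S (S b - a)) by lia.
  change (L f a (S (S b - a)) = L f a (S b - a) + f (S b)).
  rewrite L_S. f_equal. f_equal. lia.
Qed.

Lemma fsum_Sl a b f : (a <= b)%nat -> fsum a b f = f a + fsum (S a) b f.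
Proof.
  intros H. unfold fsum. replace (S b - a)%nat with (S (S b - S a)) by lia. reflexivity.
Qed.

Lemma fsum_single a f : fsum a a f = f a.
Proof. unfold fsum. replace (S a - a)%nat with 1%nat by lia. simpl. ring. Qed.

Lemma fsum_ext a b f g : (forall k, (a <= k <= b)%nat -> f k = g k) -> fsum a b f = fsum a b g.
Proof.
  intros H. destruct (le_lt_dec a b) as [Hab|Hab].
  2: rewrite !fsum_empty by lia; reflexivity.
  induction b.
  - assert (a = 0%nat) by lia. subst. rewrite !fsum_single. apply H; lia.
  - destruct (Nat.eq_dec a (S b)) as [E|E].
    + subst. rewrite !fsum_single. apply H; lia.
    + rewrite !fsum_Sr by lia. rewrite IHb by (intros; try apply H; lia). rewrite H by lia. reflexivity.
Qed.

Lemma fsum_plus a b f g : fsum a b (fun k => f k + g k) = fsum a b f + fsum a b g.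
Proof.
  induction b.
  - destruct a. rewrite !fsum_single; ring. rewrite !fsum_empty by lia; ring.
  - destruct (le_lt_dec a (S b)). rewrite !fsum_Sr by lia. rewrite IHb. ring.
    rewrite !fsum_empty by lia; ring.
Qed.

Lemma fsum_scal a b c f : fsum a b (fun k => c * f k) = c * fsum a b f.
Proof.
  induction b.
  - destruct a. rewrite !fsum_single; ring. rewrite !fsum_empty by lia; ring.
  - destruct (le_lt_dec a (S b)). rewrite !fsum_Sr by lia. rewrite IHb. ring.
    rewrite !fsum_empty by lia; ring.
Qed.

Lemma fsum_opp a b f : fsum a b (fun k => - f k) = - fsum a b f.
Proof. rewrite <- (fsum_ext a b (fun k => -1 * f k)) by (intros; ring). rewrite fsum_scal; ring. Qed.

Lemma fsum_minus a b f g : fsum a b (fun k => f k - g k) = fsum a b f - fsum a b g.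
Proof. unfold Rminus. rewrite fsum_plus, fsum_opp. ring. Qed.

Lemma fsum_zero a b : fsum a b (fun _ => 0) = 0.
Proof. transitivity (fsum a b (fun k => 0 * (fun _ => 1) k)); [apply fsum_ext; intros; simpl; ring | rewrite fsum_scal; ring]. Qed.

Lemma fsum_shift a b f : fsum (S a) (S b) f = fsum a b (fun k => f (S k)).
Proof. unfold fsum. replace (S (S b) - S a)%nat with (S b - a)%nat by lia.
  unfold L. generalize (S b - a)%nat. intros n. revert a. induction n; intros; simpl; auto.
  rewrite IHn. reflexivity. Qed.

Lemma fsum_le a b f g : (forall k, (a <= k <= b)%nat -> f k <= g k) -> fsum a b f <= fsum a b g.
Proof.
  intros H. induction b.
  - destruct a. rewrite !fsum_single; apply H; lia. rewrite !fsum_empty by lia; lra.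
  - destruct (le_lt_dec a (S b)). rewrite !fsum_Sr by lia.
    assert (fsum a b f <= fsum a b g) by (apply IHb; intros; apply H; lia).
    assert (f (S b) <= g (S b)) by (apply H; lia). lra.
    rewrite !fsum_empty by lia; lra.
Qed.

Lemma fsum_nonneg a b f : (forall k, (a <= k <= b)%nat -> 0 <= f k) -> 0 <= fsum a b f.
Proof. intros H. rewrite <- (fsum_zero a b). apply fsum_le. exact H. Qed.

Lemma fsum_abs a b f : Rabs (fsum a b f) <= fsum a b (fun k => Rabs (f k)).
Proof.
  induction b.
  - destruct a. rewrite !fsum_single; lra. rewrite !fsum_empty by lia. rewrite Rabs_R0; lra.
  - destruct (le_lt_dec a (S b)). rewrite !fsum_Sr by lia.
    eapply Rle_trans. apply Rabs_triang. lra.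
    rewrite !fsum_empty by lia. rewrite Rabs_R0; lra.
Qed.

Lemma fsum_swap a b c d (F : nat -> nat -> R) :
  fsum a b (fun i => fsum c d (fun j => F i j)) = fsum c d (fun j => fsum a b (fun i => F i j)).
Proof.
  induction b.
  - destruct a. rewrite !fsum_single. apply fsum_ext. intros; rewrite fsum_single; auto.
    rewrite fsum_empty by lia. rewrite <- (fsum_zero c d). apply fsum_ext. intros; rewrite fsum_empty by lia; auto.
  - destruct (le_lt_dec a (S b)). rewrite !fsum_Sr by lia. rewrite IHb.
    rewrite <- fsum_plus. apply fsum_ext. intros. rewrite fsum_Sr by lia. auto.
    rewrite fsum_empty by lia. rewrite <- (fsum_zero c d). apply fsum_ext. intros; rewrite fsum_empty by lia; auto.
Qed.

Lemma fsum_sum_f_R0 n f : fsum 0 n f = sum_f_R0 f n.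
Proof. induction n. rewrite fsum_single; reflexivity. rewrite fsum_Sr by lia. simpl. rewrite IHn. reflexivity. Qed.

Lemma fsum_sum_n n f : fsum 0 n f = sum_n f n.
Proof. rewrite sum_n_Reals. apply fsum_sum_f_R0. Qed.

Lemma fsum_extend m N f : (m <= N)%nat -> fsum 0 m f = fsum 0 N (fun i => if Nat.leb i m then f i else 0).
Proof.
  intros H. induction N.
  - assert (m = 0%nat) by lia. subst. rewrite !fsum_single. reflexivity.
  - destruct (Nat.eq_dec m (S N)).
    + subst. apply fsum_ext. intros. destruct (Nat.leb_spec k (S N)); auto; lia.
    + rewrite fsum_Sr by lia. rewrite <- IHN by lia. destruct (Nat.leb_spec (S N) m); [lia|ring].
Qed.

Lemma fsum_triangle N (F : nat -> nat -> R) :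
  fsum 0 N (fun l => fsum 0 (N - l) (fun i => F l i)) = fsum 0 N (fun i => fsum 0 (N - i) (fun l => F l i)).
Proof.
  transitivity (fsum 0 N (fun l => fsum 0 N (fun i => if Nat.leb i (N - l) then F l i else 0))).
  { apply fsum_ext; intros. apply fsum_extend; lia. }
  rewrite fsum_swap.
  apply fsum_ext; intros i Hi. rewrite (fsum_extend (N - i) N) by lia. apply fsum_ext; intros l Hl.
  destruct (Nat.leb_spec i (N - l)), (Nat.leb_spec l (N - i)); auto; lia.
Qed.

Lemma fsum_rev N f : fsum 0 N f = fsum 0 N (fun i => f (N - i)%nat).
Proof.
  revert f. induction N; intros f.
  - rewrite !fsum_single. reflexivity.
  - rewrite fsum_Sl by lia. rewrite fsum_shift. rewrite IHN.
    rewrite fsum_Sr by lia. replace (S N - S N)%nat with 0%nat by lia. rewrite Rplus_comm. f_equal.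
    apply fsum_ext. intros. f_equal. lia.
Qed.


Lemma is_series_Rplus (a b : nat -> R) la lb : is_series a la -> is_series b lb -> is_series (fun n => a n + b n) (la + lb).
Proof. intros. exact (is_series_plus a b la lb H H0). Qed.
Lemma is_series_Rscal (a : nat -> R) c l : is_series a l -> is_series (fun n => c * a n) (c * l).
Proof. intros. exact (is_series_scal c a l H). Qed.
Lemma is_series_Rminus (a b : nat -> R) la lb : is_series a la -> is_series b lb -> is_series (fun n => a n - b n) (la - lb).
Proof. intros. exact (is_series_minus a b la lb H H0). Qed.
Lemma is_series_zero : is_series (fun _ : nat => 0) 0.
Proof.
  assert (H := is_series_Rscal _ 0 _ (is_series_geom (1/2) ltac:(rewrite Rabs_pos_eq; lra))).
  rewrite Rmult_0_l in H. eapply is_series_ext. 2: exact H. intros; simpl; ring.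
Qed.

Lemma is_series_fsum a b (F : nat -> nat -> R) (Lv : nat -> R) :
  (forall i, (a <= i <= b)%nat -> is_series (F i) (Lv i)) ->
  is_series (fun n => fsum a b (fun i => F i n)) (fsum a b Lv).
Proof.
  intros H. induction b.
  - destruct a. rewrite fsum_single. eapply is_series_ext. 2: apply H; lia. intros; rewrite fsum_single; auto.
    rewrite fsum_empty by lia. eapply is_series_ext. 2: apply is_series_zero.
    intros; rewrite fsum_empty by lia. auto.
  - destruct (le_lt_dec a (S b)).
    + destruct (Nat.eq_dec a (S b)).
      * subst. rewrite fsum_single. eapply is_series_ext. 2: apply H; lia. intros; rewrite fsum_single; auto.
      * rewrite fsum_Sr by lia. eapply is_series_ext. 2: apply is_series_Rplus. 2: apply IHb; intros; apply H; lia.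
        2: apply H; lia. intros; simpl. rewrite fsum_Sr by lia. auto.
    + rewrite fsum_empty by lia. eapply is_series_ext. 2: apply is_series_zero.
      intros; rewrite fsum_empty by lia. auto.
Qed.

Lemma sum1_fsum a b (F : nat -> nat -> R) :
  (forall i, (a <= i <= b)%nat -> ex_sum1 (F i)) ->
  ex_sum1 (fun n => fsum a b (fun i => F i n)) /\ sum1 (fun n => fsum a b (fun i => F i n)) = fsum a b (fun i => sum1 (F i)).
Proof.
  intros H.
  assert (is_series (fun k => fsum a b (fun i => F i (S k))) (fsum a b (fun i => sum1 (F i)))).
  { apply (is_series_fsum a b (fun i k => F i (S k))). intros. apply Series_correct. apply H. auto. }
  split. eexists; exact H0. apply is_series_unique. exact H0.
Qed.

Lemma is_series_Rext (a b : nat -> R) (l : R) : (forall n, a n = b n) -> is_series a l -> is_series b l.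
Proof. intros. eapply is_series_ext; eauto. Qed.

Definition ec (j : nat) : R := (-1) ^ j / INR (fact (j + 1)).

Fixpoint af (n : nat) : nat -> R :=
  match n with
  | O => fun _ => 1
  | S n' => fun i => if Nat.leb i n' then af n' i
                     else - fsum 0 n' (fun k => af n' k * ec (S n' - k))
  end.
Definition ac (n : nat) : R := af n n.

Lemma af_stable n : forall i, (i <= n)%nat -> af n i = ac i.
Proof.
  induction n; intros i Hi.
  - assert (i = 0%nat) by lia. subst. reflexivity.
  - destruct (Nat.eq_dec i (S n)). subst; reflexivity.
    simpl. destruct (Nat.leb_spec i n); [|lia]. apply IHn; lia.
Qed.

Lemma ac_rec n : ac (S n) = - fsum 0 n (fun k => ac k * ec (S n - k)).
Proof.
  unfold ac at 1. change (af (S n) (S n)) with (if Nat.leb (S n) n then af n (S n) else - fsum 0 n (fun k => af n k * ec (S n - k))).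
  destruct (Nat.leb_spec (S n) n); [lia|].
  f_equal. apply fsum_ext. intros. rewrite af_stable by lia. reflexivity.
Qed.

Lemma ac0 : ac 0 = 1.
Proof. reflexivity. Qed.

Lemma ec0 : ec 0 = 1.
Proof. unfold ec. simpl. field. Qed.

Lemma conv_ae n : fsum 0 n (fun k => ac k * ec (n - k)) = if Nat.eqb n 0 then 1 else 0.
Proof.
  destruct n.
  - rewrite fsum_single. simpl. rewrite ac0, ec0. ring.
  - rewrite fsum_Sr by lia. rewrite Nat.sub_diag, ec0, ac_rec. simpl. ring.
Qed.

Lemma INR_fact_pos n : 0 < INR (fact n).
Proof. apply lt_0_INR. apply lt_O_fact. Qed.

Lemma Rabs_ec j : Rabs (ec j) = / INR (fact (j + 1)).
Proof.
  unfold ec, Rdiv. rewrite Rabs_mult, <- RPow_abs. replace (Rabs (-1)) with 1 by (rewrite Rabs_left; lra). rewrite pow1.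
  rewrite Rabs_inv, Rabs_pos_eq by (left; apply INR_fact_pos). ring.
Qed.

Lemma sum_inv_fact n : fsum 0 n (fun k => / INR (fact (k + 2))) <= 1 - / INR (n + 2).
Proof.
  induction n.
  - rewrite fsum_single. simpl. lra.
  - rewrite fsum_Sr by lia.
    assert (/ INR (fact (S n + 2)) <= / INR (n + 2) - / INR (S n + 2)).
    { replace (S n + 2)%nat with (S (n+2)) by lia. rewrite fact_simpl, mult_INR.
      rewrite S_INR. assert (0 < INR (n+2)) by (apply lt_0_INR; lia).
      assert (INR (n + 2) <= INR (fact (n+2))).
      { apply le_INR. replace (n+2)%nat with (S (S n)) by lia. rewrite fact_simpl.
        assert (1 <= fact (S n))%nat by (apply lt_O_fact). nia. }
      replace (/ INR (n + 2) - / (INR (n + 2) + 1)) with (/ ((INR (n + 2) + 1) * INR (n+2))) by (field; lra).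
      apply Rinv_le_contravar. nra. apply Rmult_le_compat_l; lra. }
    assert (E : INR (S n + 2) = INR (n+2) + 1) by (rewrite !plus_INR, S_INR; ring).
    rewrite E in *. lra.
Qed.

Lemma ac_bound n : Rabs (ac n) <= 1.
Proof.
  induction n as [n IH] using (well_founded_induction lt_wf).
  destruct n. rewrite ac0, Rabs_R1; lra.
  rewrite ac_rec, Rabs_Ropp. eapply Rle_trans. apply fsum_abs.
  eapply Rle_trans. apply (fsum_le _ _ _ (fun k => / INR (fact (S n - k + 1)))).
  { intros k Hk. rewrite Rabs_mult, Rabs_ec. rewrite <- (Rmult_1_l (/ _)) at 2.
    apply Rmult_le_compat_r. left; apply Rinv_0_lt_compat, INR_fact_pos. apply IH. lia. }
  rewrite fsum_rev. eapply Rle_trans. 2: apply (Rle_trans _ _ _ (sum_inv_fact n)).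
  right. apply fsum_ext. intros. f_equal. f_equal. f_equal. lia.
  assert (0 < / INR (n+2)) by (apply Rinv_0_lt_compat, lt_0_INR; lia). lra.
Qed.

Lemma ec_bound n : Rabs (ec n) <= 1.
Proof.
  rewrite Rabs_ec. rewrite <- Rinv_1. apply Rinv_le_contravar. lra.
  replace 1 with (INR 1) by reflexivity. apply le_INR. apply lt_O_fact.
Qed.

Lemma radius_ge1 (c : nat -> R) : (forall n, Rabs (c n) <= 1) -> Rbar_le 1 (CV_radius c).
Proof.
  intros H. apply (proj1 (CV_radius_bounded c)). exists 1. intros n. rewrite pow1, Rmult_1_r. apply H.
Qed.

Lemma radius_lt (c : nat -> R) x : (forall n, Rabs (c n) <= 1) -> Rabs x < 1 -> Rbar_lt (Rabs x) (CV_radius c).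
Proof.
  intros H Hx. eapply Rbar_lt_le_trans. 2: apply radius_ge1; auto. exact Hx.
Qed.

Lemma to_pseries (c : nat -> R) x l : is_series (fun k => c k * x ^ k) l -> is_pseries c x l.
Proof.
  intros H. unfold is_pseries. eapply is_series_ext. 2: exact H. intros n. rewrite pow_n_pow.
  unfold scal; simpl; unfold mult; simpl. ring.
Qed.

Lemma ec_series x : x <> 0 -> is_pseries ec x ((1 - exp (- x)) / x).
Proof.
  intros Hx. apply to_pseries.
  assert (H := is_exp_Reals (- x)). unfold is_pseries in H.
  assert (H1 : is_series (fun n => / INR (fact n) * (- x) ^ n) (exp (- x))).
  { eapply is_series_ext. 2: exact H. intros n. unfold scal; simpl; unfold mult; simpl. rewrite pow_n_pow. ring. }
  assert (H2 : is_series (fun k => / INR (fact (S k)) * (- x) ^ (S k)) (exp (- x) - 1)).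
  { apply (is_series_incr_1 (fun n => / INR (fact n) * (- x) ^ n)). 
    assert (E : exp (- x) = exp (- x) - 1 + / INR (fact 0) * (- x) ^ 0) by (simpl; field).
    rewrite E in H1. exact H1. }
  assert (H3 := is_series_Rscal _ (- / x) _ H2).
  replace ((1 - exp (- x)) / x) with (- / x * (exp (- x) - 1)) by (field; auto).
  eapply is_series_Rext. 2: exact H3. intros n. cbv beta. unfold ec.
  replace (n + 1)%nat with (S n) by lia.
  assert (Hf := INR_fact_pos (S n)).
  replace (-x) with (-1 * x) by ring. rewrite Rpow_mult_distr. rewrite <- tech_pow_Rmult.
  rewrite <- tech_pow_Rmult. set (F := INR (fact (S n))) in *. field. lra.
Qed.

Lemma PS_mult_ae n : PS_mult ac ec n = if Nat.eqb n 0 then 1 else 0.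
Proof. unfold PS_mult. rewrite <- fsum_sum_f_R0. apply conv_ae. Qed.

Lemma pseries_delta x : PSeries (fun n => if Nat.eqb n 0 then 1 else 0) x = 1.
Proof.
  apply is_pseries_unique. apply to_pseries.
  assert (E : forall N, sum_n (fun k => (if Nat.eqb k 0 then 1 else 0) * x ^ k) N = 1).
  { intros N. rewrite <- fsum_sum_n. induction N. rewrite fsum_single. simpl; ring.
    rewrite fsum_Sr by lia. rewrite IHN. simpl. ring. }
  assert (HL : is_lim_seq (sum_n (fun k => (if Nat.eqb k 0 then 1 else 0) * x ^ k)) 1).
  { apply (is_lim_seq_ext (fun _ => 1)). intros; rewrite E; auto. apply is_lim_seq_const. }
  exact HL.
Qed.

Lemma bern_local x : Rabs x < 1 -> bern_gf x = PSeries ac x.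
Proof.
  intros Hx. unfold bern_gf. destruct (Req_EM_T x 0) as [E|E].
  - subst. rewrite PSeries_0. reflexivity.
  - assert (H := PSeries_mult ac ec x (radius_lt _ _ ac_bound Hx) (radius_lt _ _ ec_bound Hx)).
    rewrite (PSeries_ext _ _ _ PS_mult_ae), pseries_delta in H.
    rewrite (is_pseries_unique _ _ _ (ec_series x E)) in H.
    assert (exp (- x) <> 1).
    { intros C. rewrite <- exp_0 in C. apply exp_inv in C. apply E. lra. }
    assert (1 - exp (- x) <> 0) by lra.
    apply (Rmult_eq_reg_r ((1 - exp (- x)) / x)). rewrite <- H. field. auto.
    intros C. unfold Rdiv in C. apply Rmult_integral in C. destruct C as [C|C]. auto.
    apply Rinv_neq_0_compat in E. auto.
Qed.

Lemma Bplus_ac j : Bplus j = ac j * INR (fact j).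
Proof.
  unfold Bplus. rewrite (Derive_n_ext_loc bern_gf (PSeries ac)).
  - apply Derive_n_coef. assert (H := radius_lt _ 0 ac_bound). rewrite Rabs_R0 in H. apply H. lra.
  - exists (mkposreal 1 Rlt_0_1). intros y Hy. apply bern_local.
    change (Rabs (y - 0) < 1) in Hy. rewrite Rminus_0_r in Hy. exact Hy.
Qed.

Definition dd (j : nat) : R := (-1) ^ j / INR (fact j).

Lemma binom_cauchy x k : (x - 1) ^ k / INR (fact k) = fsum 0 k (fun i => x ^ i / INR (fact i) * dd (k - i)).
Proof.
  unfold Rminus. rewrite binomial. rewrite <- fsum_sum_f_R0.
  unfold Rdiv. rewrite Rmult_comm. rewrite <- fsum_scal. apply fsum_ext. intros i Hi.
  unfold dd, Binomial.C.
  assert (H1 := INR_fact_pos k). assert (H2 := INR_fact_pos i). assert (H3 := INR_fact_pos (k - i)).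
  replace (- (1)) with (-1) by ring. set (A := INR (fact k)) in *. set (B := INR (fact i)) in *. set (Cc := INR (fact (k - i))) in *. field. lra.
Qed.

Lemma dd0 : dd 0 = 1.
Proof. unfold dd; simpl; field. Qed.

Lemma dd_S j : dd (S j) = - ec j.
Proof.
  unfold dd, ec. replace (j + 1)%nat with (S j) by lia. simpl pow.
  assert (H := INR_fact_pos (S j)). set (F := INR (fact (S j))) in *. field. lra.
Qed.

Lemma conv_ad M : fsum 0 M (fun l => ac l * dd (M - l)) = ac M - (if Nat.eqb M 1 then 1 else 0).
Proof.
  destruct M.
  - rewrite fsum_single. simpl. rewrite dd0. ring.
  - rewrite fsum_Sr by lia. rewrite Nat.sub_diag, dd0.
    rewrite (fsum_ext _ _ _ (fun l => - (ac l * ec (M - l)))).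
    2: { intros l Hl. replace (S M - l)%nat with (S (M - l)) by lia. rewrite dd_S. ring. }
    rewrite fsum_opp, conv_ae. destruct M; simpl; ring.
Qed.

Lemma fsum_delta N j g : (j <= N)%nat -> fsum 0 N (fun i => if Nat.eqb i j then g i else 0) = g j.
Proof.
  intros H. induction N.
  - assert (j = 0%nat) by lia. subst. rewrite fsum_single. reflexivity.
  - destruct (Nat.eq_dec j (S N)).
    + subst. rewrite fsum_Sr by lia. rewrite Nat.eqb_refl.
      rewrite (fsum_ext _ _ _ (fun _ => 0)). rewrite fsum_zero. ring.
      intros k Hk. destruct (Nat.eqb_spec k (S N)); [lia|auto].
    + rewrite fsum_Sr by lia. rewrite IHN by lia. destruct (Nat.eqb_spec (S N) j); [lia|ring].
Qed.

Definition G N x := fsum 0 N (fun l => ac l * x ^ (N - l) / INR (fact (N - l))).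

Lemma G_shift N x : G (S N) (x - 1) = G (S N) x - x ^ N / INR (fact N).
Proof.
  unfold G.
  rewrite (fsum_ext _ _ _ (fun l => fsum 0 (S N - l) (fun i => ac l * (x ^ i / INR (fact i) * dd (S N - l - i))))).
  2: { intros l Hl. transitivity (ac l * ((x-1)^(S N - l) / INR (fact (S N - l)))). unfold Rdiv; ring.
       rewrite binom_cauchy, <- fsum_scal. reflexivity. }
  rewrite fsum_triangle.
  rewrite (fsum_ext _ _ _ (fun i => x ^ i / INR (fact i) * (ac (S N - i) - (if Nat.eqb (S N - i) 1 then 1 else 0)))).
  2: { intros i Hi. rewrite <- conv_ad. rewrite <- fsum_scal. apply fsum_ext. intros l Hl.
       replace (S N - l - i)%nat with (S N - i - l)%nat by lia. ring. }
  rewrite (fsum_ext _ _ _ (fun i => x ^ i / INR (fact i) * ac (S N - i) - (if Nat.eqb i N then x ^ i / INR (fact i) else 0))).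
  2: { intros i Hi. destruct (Nat.eqb_spec (S N - i) 1), (Nat.eqb_spec i N); try lia; ring. }
  rewrite fsum_minus. rewrite fsum_delta by lia. f_equal.
  rewrite fsum_rev. apply fsum_ext. intros l Hl. replace (S N - (S N - l))%nat with l by lia. unfold Rdiv. ring.
Qed.

Lemma G_0 N : G N 0 = ac N.
Proof.
  unfold G. destruct N. rewrite fsum_single. rewrite Nat.sub_diag, pow_O. unfold fact, INR. field.
  rewrite fsum_Sr by lia. rewrite (fsum_ext _ _ _ (fun _ => 0)). rewrite fsum_zero. rewrite Nat.sub_diag, pow_O. unfold fact, INR. field.
  intros k Hk. rewrite pow_i by lia. unfold Rdiv. ring.
Qed.

Lemma faulhaber_G p n : fsum 1 n (fun j => INR j ^ p) = INR (fact p) * (G (S p) (INR n) - ac (S p)).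
Proof.
  induction n.
  - rewrite fsum_empty by lia. simpl INR. rewrite G_0. ring.
  - rewrite fsum_Sr by lia. rewrite IHn.
    assert (E := G_shift p (INR (S n))). replace (INR (S n) - 1) with (INR n) in E by (rewrite S_INR; ring).
    rewrite E. assert (H := INR_fact_pos p). field. lra.
Qed.

Lemma H_neg n p : H n (- Z.of_nat p) = fsum 1 n (fun j => INR j ^ p).
Proof.
  unfold H. apply fsum_ext. intros. rewrite Z.opp_involutive. rewrite pow_powerRZ. reflexivity.
Qed.

Lemma faulhaber n p : H n (- Z.of_nat p) =
  / INR (p + 1) * fsum 0 p (fun l => Binomial.C (p + 1) l * Bplus l * INR n ^ (p + 1 - l)).
Proof.
  rewrite H_neg, faulhaber_G. unfold G. rewrite fsum_Sr by lia. rewrite Nat.sub_diag.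
  replace (p + 1)%nat with (S p) by lia.
  rewrite pow_O. change (INR (fact 0)) with 1.
  replace (fsum 0 p (fun l : nat => ac l * INR n ^ (S p - l) / INR (fact (S p - l))) + ac (S p) * 1 / 1 - ac (S p))
    with (fsum 0 p (fun l : nat => ac l * INR n ^ (S p - l) / INR (fact (S p - l)))) by field.
  rewrite <- !fsum_scal. apply fsum_ext. intros l Hl. rewrite Bplus_ac. unfold Binomial.C.
  rewrite fact_simpl, mult_INR.
  assert (H1 := INR_fact_pos p). assert (H2 := INR_fact_pos l). assert (H3 := INR_fact_pos (S p - l)).
  assert (0 < INR (S p)) by (apply lt_0_INR; lia).
  set (A := INR (fact p)) in *. set (B := INR (fact l)) in *. set (Cc := INR (fact (S p - l))) in *.
  field. lra.
Qed.

Lemma lim_inv_sqrt : is_lim_seq (fun n => / sqrt (INR (S n))) 0.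
Proof.
  assert (H1 : is_lim_seq (fun n => sqrt (INR n)) p_infty).
  { exact (filterlim_comp _ _ _ INR sqrt eventually (Rbar_locally p_infty) _ is_lim_seq_INR filterlim_sqrt_p). }
  assert (H2 := is_lim_seq_inv _ _ H1 ltac:(discriminate)). simpl in H2.
  apply (is_lim_seq_incr_1 (fun n => / sqrt (INR n))). exact H2.
Qed.

Lemma sqrt_ge1 x : 1 <= x -> 1 <= sqrt x.
Proof. intros. rewrite <- sqrt_1. apply sqrt_le_1_alt. lra. Qed.

Lemma key_ineq n : 1 <= n -> sqrt n / n ^ 2 <= 4 * (/ sqrt n - / sqrt (n + 1)).
Proof.
  intros Hn. assert (Hs := sqrt_ge1 n Hn). assert (Ht := sqrt_ge1 (n+1) ltac:(lra)).
  assert (Es := sqrt_sqrt n ltac:(lra)). assert (Et := sqrt_sqrt (n+1) ltac:(lra)).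
  set (s := sqrt n) in *. set (t := sqrt (n+1)) in *.
  assert (st : s <= t). { unfold s, t. apply sqrt_le_1_alt. lra. }
  rewrite <- Es. 
  assert (t <= 2 * s) by nra.
  replace (s / (s * s) ^ 2) with (/ (s * s * s)) by (field; lra).
  replace (/ s - / t) with ((t - s) / (s * t)) by (field; lra).
  assert (Hts : (t - s) * (t + s) = 1) by nra.
  assert (t - s = / (t + s)) by (field_simplify_eq; nra).
  rewrite H0. 
  replace (4 * (/ (t + s) / (s * t))) with (/ ((t + s) * (s * t) / 4)) by (field; nra).
  apply Rinv_le_contravar. nra. nra.
Qed.

Lemma tele_series (u : nat -> R) : is_lim_seq u 0 -> is_series (fun k => u k - u (S k)) (u 0%nat).
Proof.
  intros H. 
  assert (E : forall N, fsum 0 N (fun k => u k - u (S k)) = u 0%nat - u (S N)).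
  { intros N. induction N. rewrite fsum_single; ring. rewrite fsum_Sr by lia. rewrite IHN; ring. }
  assert (HL : is_lim_seq (sum_n (fun k => u k - u (S k))) (u 0%nat)).
  { apply (is_lim_seq_ext (fun N => u 0%nat - u (S N))). intros; rewrite <- fsum_sum_n, E; auto.
    replace (Finite (u 0%nat)) with (Finite (u 0%nat - 0)) by (f_equal; ring).
    apply is_lim_seq_minus'. apply is_lim_seq_const. apply (is_lim_seq_incr_1 u). exact H. }
  exact HL.
Qed.

Lemma master (f : nat -> R) C : (forall n, (1 <= n)%nat -> 0 <= f n <= C * (sqrt (INR n) / INR n ^ 2)) -> ex_sum1 f.
Proof.
  intros H. unfold ex_sum1.
  apply (@ex_series_le R_AbsRing R_CompleteNormedModule (fun k => f (S k)) (fun k => C * (4 * (/ sqrt (INR (S k)) - / sqrt (INR (S (S k))))))).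
  - intros k. destruct (H (S k) ltac:(lia)) as [H0 H1].
    change (norm (f (S k))) with (Rabs (f (S k))). rewrite Rabs_pos_eq by lra.
    eapply Rle_trans. apply H1. assert (0 <= C).
    { assert (0 <= sqrt (INR (S k)) / INR (S k) ^ 2). apply Rmult_le_pos. apply sqrt_pos.
      left; apply Rinv_0_lt_compat, pow_lt, lt_0_INR; lia.
      destruct (Rle_lt_dec 0 C); auto. 
      assert (0 < sqrt (INR (S k)) / INR (S k) ^ 2). apply Rmult_lt_0_compat. apply sqrt_lt_R0, lt_0_INR; lia.
      apply Rinv_0_lt_compat, pow_lt, lt_0_INR; lia. nra. }
    apply Rmult_le_compat_l; auto. rewrite (S_INR (S k)). apply key_ineq. 
    rewrite S_INR. assert (0 <= INR k) by apply pos_INR. lra.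
  - eexists. apply is_series_Rscal. apply is_series_Rscal.
    apply (tele_series (fun k => / sqrt (INR (S k)))). apply lim_inv_sqrt.
Qed.

Lemma pow_term j p : powerRZ (INR j) (- Z.of_nat p) = / INR j ^ p.
Proof. rewrite powerRZ_neg', <- pow_powerRZ. reflexivity. Qed.

Lemma H_pos_eq n p : H n (Z.of_nat p) = fsum 1 n (fun j => / INR j ^ p).
Proof. unfold H. apply fsum_ext. intros. apply pow_term. Qed.

Lemma H_nonneg n p : 0 <= H n (Z.of_nat p).
Proof.
  rewrite H_pos_eq. apply fsum_nonneg. intros. left. apply Rinv_0_lt_compat, pow_lt, lt_0_INR. lia.
Qed.

Lemma H_zero n : H n 0 = INR n.
Proof.
  unfold H. induction n. rewrite fsum_empty by lia. reflexivity.
  rewrite fsum_Sr by lia. rewrite IHn. rewrite S_INR. simpl. ring.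
Qed.

Lemma H_le_harm n p : (1 <= p)%nat -> H n (Z.of_nat p) <= fsum 1 n (fun j => / INR j).
Proof.
  intros Hp. rewrite H_pos_eq. apply fsum_le. intros j Hj.
  assert (1 <= INR j) by (replace 1 with (INR 1) by reflexivity; apply le_INR; lia).
  apply Rinv_le_contravar. lra. replace (INR j) with (INR j ^ 1) at 1 by ring. apply Rle_pow; auto.
Qed.

Lemma harm_bound n : fsum 1 n (fun j => / INR j) <= 4 * sqrt (sqrt (INR n)).
Proof.
  induction n.
  - rewrite fsum_empty by lia. simpl. rewrite sqrt_0, sqrt_0. lra.
  - rewrite fsum_Sr by lia.
    assert (Hn := pos_INR n).
    assert (E1 := sqrt_sqrt (INR n) Hn). assert (E2 := sqrt_sqrt (sqrt (INR n)) (sqrt_pos _)).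
    assert (F1 := sqrt_sqrt (INR (S n)) (pos_INR _)). assert (F2 := sqrt_sqrt (sqrt (INR (S n))) (sqrt_pos _)).
    assert (G1 : 1 <= sqrt (sqrt (INR (S n)))).
    { apply sqrt_ge1, sqrt_ge1. rewrite S_INR; lra. }
    assert (G2 : sqrt (sqrt (INR n)) <= sqrt (sqrt (INR (S n)))).
    { apply sqrt_le_1_alt, sqrt_le_1_alt. rewrite S_INR; lra. }
    assert (G0 := sqrt_pos (sqrt (INR n))).
    set (a := sqrt (sqrt (INR (S n)))) in *. set (b := sqrt (sqrt (INR n))) in *.
    set (s := sqrt (INR (S n))) in *. set (t := sqrt (INR n)) in *.
    assert (A4 : a * a * (a * a) = INR n + 1) by (rewrite F2, F1, S_INR; ring).
    assert (B4 : b * b * (b * b) = INR n) by (rewrite E2, E1; ring).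
    rewrite S_INR. rewrite <- A4.
    assert (E : (a-b)*((a+b)*(a*a+b*b)) = 1).
    { replace ((a-b)*((a+b)*(a*a+b*b))) with (a * a * (a * a) - b * b * (b * b)) by ring. lra. }
    assert (Q : (a+b)*(a*a+b*b) <= 4*(a*a*a)).
    { assert (b * b <= a * a) by nra. assert (a + b <= 2 * a) by lra. 
      assert (a*a+b*b <= 2*(a*a)) by lra. assert (0 <= a*a+b*b) by nra.
      apply (Rle_trans _ ((2*a)*(a*a+b*b))). apply Rmult_le_compat_r; lra. nra. }
    assert (K : (a - b) * (4 * (a * a * a)) >= 1).
    { assert (0 <= a - b) by lra. apply Rle_ge. rewrite <- E. apply Rmult_le_compat_l; lra. }
    assert (K2 : / (a * a * (a * a)) <= 4 * (a - b)).
    { rewrite <- Rmult_1_l. apply (Rmult_le_reg_r (a * a * (a * a))). nra.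
      field_simplify. 2: nra. nra. }
    lra.
Qed.

Lemma H_bound n p : (1 <= p)%nat -> H n (Z.of_nat p) <= 4 * sqrt (sqrt (INR n)).
Proof. intros. eapply Rle_trans. apply H_le_harm; auto. apply harm_bound. Qed.

Lemma H_bound2 n p : (1 <= n)%nat -> (1 <= p)%nat -> H n (Z.of_nat p) <= 4 * sqrt (INR n).
Proof.
  intros Hn Hp. eapply Rle_trans. apply H_bound; auto.
  assert (1 <= INR n) by (replace 1 with (INR 1) by reflexivity; apply le_INR; lia).
  assert (1 <= sqrt (sqrt (INR n))) by (apply sqrt_ge1, sqrt_ge1; lra).
  rewrite <- (sqrt_sqrt (sqrt (INR n))) at 2 by apply sqrt_pos. nra.
Qed.

Lemma HH_bound n p1 p2 : (1 <= p1)%nat -> (1 <= p2)%nat -> H n (Z.of_nat p1) * H n (Z.of_nat p2) <= 16 * sqrt (INR n).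
Proof.
  intros Q1 Q2. assert (A := H_bound n p1 Q1). assert (B := H_bound n p2 Q2).
  assert (C1 := H_nonneg n p1). assert (C2 := H_nonneg n p2).
  rewrite <- (sqrt_sqrt (sqrt (INR n))) by apply sqrt_pos.
  assert (0 <= sqrt (sqrt (INR n))) by apply sqrt_pos. nra.
Qed.

Lemma div_bound X D C n : (1 <= n)%nat -> 0 <= X <= C * sqrt (INR n) -> INR n ^ 2 <= D ->
  0 <= X / D <= C * (sqrt (INR n) / INR n ^ 2).
Proof.
  intros Hn [HX1 HX2] HD.
  assert (1 <= INR n) by (replace 1 with (INR 1) by reflexivity; apply le_INR; lia).
  assert (P : 0 < INR n ^ 2) by (apply pow_lt; lra).
  split. apply Rmult_le_pos; auto. left; apply Rinv_0_lt_compat; lra.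
  unfold Rdiv. rewrite <- Rmult_assoc. apply Rmult_le_compat; auto.
  left; apply Rinv_0_lt_compat; lra. apply Rinv_le_contravar; auto.
Qed.

Lemma INR_ge1 n : (1 <= n)%nat -> 1 <= INR n.
Proof. intros; replace 1 with (INR 1) by reflexivity; apply le_INR; lia. Qed.

Lemma pow_ge_n2 n k : (1 <= n)%nat -> (2 <= k)%nat -> INR n ^ 2 <= INR n ^ k.
Proof. intros. apply Rle_pow; auto. apply INR_ge1; auto. Qed.

Lemma den_ge n m r : (1 <= n)%nat -> (1 <= m)%nat -> INR n ^ 2 <= INR n ^ m * (INR n + INR r) ^ 1.
Proof.
  intros Hn Hm. assert (X := INR_ge1 n Hn). assert (Y := pos_INR r).
  assert (INR n ^ 1 <= INR n ^ m) by (apply Rle_pow; auto). simpl in *. nra.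
Qed.

Lemma ex_Tterm p1 p2 m r : (1 <= p1)%nat -> (1 <= p2)%nat -> (1 <= m)%nat ->
  ex_sum1 (Tterm (Z.of_nat p1) (Z.of_nat p2) m 1 r).
Proof.
  intros. apply (master _ 16). intros n Hn. unfold Tterm. apply div_bound; auto.
  split. apply Rmult_le_pos; apply H_nonneg. apply HH_bound; auto. apply den_ge; auto.
Qed.

Lemma ex_ES3 p1 p2 i : (1 <= p1)%nat -> (1 <= p2)%nat -> (2 <= i)%nat ->
  ex_sum1 (fun n => H n (Z.of_nat p1) * H n (Z.of_nat p2) / INR n ^ i).
Proof.
  intros. apply (master _ 16). intros n Hn. apply div_bound; auto.
  split. apply Rmult_le_pos; apply H_nonneg. apply HH_bound; auto. apply pow_ge_n2; auto.
Qed.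

Lemma ex_ES2 p q : (1 <= p)%nat -> (2 <= q)%nat -> ex_sum1 (fun n => H n (Z.of_nat p) / INR n ^ q).
Proof.
  intros. apply (master _ 4). intros n Hn. apply div_bound; auto.
  split. apply H_nonneg. apply H_bound2; auto. apply pow_ge_n2; auto.
Qed.

Lemma ex_zeta s : (2 <= s)%nat -> ex_sum1 (fun n => / INR n ^ s).
Proof.
  intros. apply (master _ 1). intros n Hn. rewrite <- (Rmult_1_l (/ _)). apply div_bound; auto.
  split. lra. assert (1 <= sqrt (INR n)) by (apply sqrt_ge1, INR_ge1; auto). lra. apply pow_ge_n2; auto.
Qed.

Lemma ex_Sterm p k b : (1 <= p)%nat -> (1 <= k)%nat -> ex_sum1 (Sterm (Z.of_nat p) k 1 b).
Proof.
  intros. apply (master _ 4). intros n Hn. unfold Sterm. apply div_bound; auto.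
  split. apply H_nonneg. apply H_bound2; auto. apply den_ge; auto.
Qed.

Lemma ex_Sterm0 k b : (2 <= k)%nat -> ex_sum1 (Sterm 0 k 1 b).
Proof.
  intros. apply (master _ 1). intros n Hn. unfold Sterm. rewrite H_zero.
  assert (X := INR_ge1 n Hn). assert (Y := pos_INR b).
  assert (INR n ^ 2 <= INR n ^ k) by (apply pow_ge_n2; auto).
  replace (INR n / (INR n ^ k * (INR n + INR b) ^ 1)) with (1 / (INR n ^ k * ((INR n + INR b) / INR n))).
  2: { simpl. field. split; nra. }
  apply div_bound; auto. split. lra. assert (1 <= sqrt (INR n)) by (apply sqrt_ge1; auto). lra.
  assert (1 <= (INR n + INR b) / INR n). { apply (Rmult_le_reg_r (INR n)). lra. field_simplify; lra. }
  nra.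
Qed.

Lemma sum1_lin a b (f : nat -> R) (c : nat -> R) (g : nat -> nat -> R) :
  (forall n, (1 <= n)%nat -> f n = fsum a b (fun i => c i * g i n)) ->
  (forall i, (a <= i <= b)%nat -> ex_sum1 (g i)) ->
  ex_sum1 f /\ sum1 f = fsum a b (fun i => c i * sum1 (g i)).
Proof.
  intros Hf Hg.
  assert (HS : is_series (fun k => f (S k)) (fsum a b (fun i => c i * sum1 (g i)))).
  { eapply is_series_Rext. intros k. symmetry. apply Hf. lia.
    apply (is_series_fsum a b (fun i k => c i * g i (S k))). intros i Hi.
    apply is_series_Rscal. apply Series_correct. apply Hg. auto. }
  split. eexists; exact HS. apply is_series_unique; exact HS.
Qed.

Lemma sum1_lin2 a b a' b' (f : nat -> R) (c : nat -> nat -> R) (g : nat -> nat -> nat -> R) :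
  (forall n, (1 <= n)%nat -> f n = fsum a b (fun i => fsum a' b' (fun j => c i j * g i j n))) ->
  (forall i j, (a <= i <= b)%nat -> (a' <= j <= b')%nat -> ex_sum1 (g i j)) ->
  ex_sum1 f /\ sum1 f = fsum a b (fun i => fsum a' b' (fun j => c i j * sum1 (g i j))).
Proof.
  intros Hf Hg.
  assert (HS : is_series (fun k => f (S k)) (fsum a b (fun i => fsum a' b' (fun j => c i j * sum1 (g i j))))).
  { eapply is_series_Rext. intros k. symmetry. apply Hf. lia.
    apply (is_series_fsum a b (fun i k => fsum a' b' (fun j => c i j * g i j (S k)))). intros i Hi.
    apply (is_series_fsum a' b' (fun j k => c i j * g i j (S k))). intros j Hj.
    apply is_series_Rscal. apply Series_correct. apply Hg; auto. }
  split. eexists; exact HS. apply is_series_unique; exact HS.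
Qed.

Lemma fsum_mult a b c d f g : fsum a b f * fsum c d g = fsum a b (fun i => fsum c d (fun j => f i * g j)).
Proof.
  rewrite Rmult_comm. rewrite <- (fsum_scal a b (fsum c d g) f).
  apply fsum_ext. intros. rewrite Rmult_comm. rewrite <- (fsum_scal c d (f k) g). reflexivity.
Qed.

Lemma INR_nz n : (1 <= n)%nat -> INR n <> 0.
Proof. intros. apply not_0_INR. lia. Qed.

Lemma part2 p1 p2 m r : (1 <= p1)%nat -> (1 <= m)%nat -> (1 <= r)%nat -> (p2 + 2 <= m)%nat ->
    ex_sum1 (Tterm (Z.of_nat p1) (- Z.of_nat p2) m 1 r) /\
    Tsum (Z.of_nat p1) (- Z.of_nat p2) m 1 r =
      / INR (p2 + 1) *
      fsum 0 p2 (fun l => Binomial.C (p2 + 1) l * Bplus l *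
                          Ssum (Z.of_nat p1) (m - p2 - 1 + l) 1 r).
Proof.
  intros H1 H2 H3 H4.
  destruct (sum1_lin 0 p2 (Tterm (Z.of_nat p1) (- Z.of_nat p2) m 1 r)
     (fun l => / INR (p2 + 1) * (Binomial.C (p2 + 1) l * Bplus l))
     (fun l => Sterm (Z.of_nat p1) (m - p2 - 1 + l) 1 r)) as [HA HB].
  - intros n Hn. unfold Tterm. rewrite faulhaber.
    assert (Hx := INR_nz n Hn). assert (Hd : 0 < INR n + INR r) by (assert (X := pos_INR n); assert (Y := pos_INR r); assert (1 <= INR n) by (apply INR_ge1; auto); lra).
    assert (Hq : 0 < INR (p2 + 1)) by (apply lt_0_INR; lia).
    assert (Hm : INR n ^ m <> 0) by (apply pow_nonzero; auto).
    set (F := fsum 0 p2 _).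
    replace (H n (Z.of_nat p1) * (/ INR (p2 + 1) * F) / (INR n ^ m * (INR n + INR r) ^ 1))
      with (/ INR (p2 + 1) * H n (Z.of_nat p1) / (INR n ^ m * (INR n + INR r) ^ 1) * F)
      by (field; repeat split; lra).
    unfold F. rewrite <- fsum_scal. apply fsum_ext. intros l Hl. unfold Sterm.
    replace (INR n ^ m) with (INR n ^ (p2 + 1 - l) * INR n ^ (m - p2 - 1 + l)) by (rewrite <- pow_add; f_equal; lia).
    assert (INR n ^ (p2 + 1 - l) <> 0) by (apply pow_nonzero; auto).
    assert (INR n ^ (m - p2 - 1 + l) <> 0) by (apply pow_nonzero; auto).
    field. repeat split; auto; lra.
  - intros l Hl. apply ex_Sterm; lia.
  - split. exact HA. unfold Tsum. rewrite HB. rewrite <- fsum_scal. apply fsum_ext. intros. unfold Ssum. ring.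
Qed.

Lemma part3 p1 p2 m r : (1 <= m)%nat -> (1 <= r)%nat -> (p1 + p2 + 3 <= m)%nat ->
    ex_sum1 (Tterm (- Z.of_nat p1) (- Z.of_nat p2) m 1 r) /\
    Tsum (- Z.of_nat p1) (- Z.of_nat p2) m 1 r =
      / (INR (p1 + 1) * INR (p2 + 1)) *
      fsum 0 p1 (fun l1 => fsum 0 p2 (fun l2 =>
        Binomial.C (p1 + 1) l1 * Binomial.C (p2 + 1) l2 * Bplus l1 * Bplus l2 *
        Ssum 0 (m - p1 - p2 - 1 + l1 + l2) 1 r)).
Proof.
  intros H2 H3 H4.
  destruct (sum1_lin2 0 p1 0 p2 (Tterm (- Z.of_nat p1) (- Z.of_nat p2) m 1 r)
     (fun l1 l2 => / (INR (p1 + 1) * INR (p2 + 1)) * (Binomial.C (p1 + 1) l1 * Binomial.C (p2 + 1) l2 * Bplus l1 * Bplus l2))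
     (fun l1 l2 => Sterm 0 (m - p1 - p2 - 1 + l1 + l2) 1 r)) as [HA HB].
  - intros n Hn. unfold Tterm. rewrite !faulhaber.
    assert (Hx := INR_nz n Hn). assert (Hd : 0 < INR n + INR r) by (assert (X := pos_INR n); assert (Y := pos_INR r); assert (1 <= INR n) by (apply INR_ge1; auto); lra).
    assert (Hq1 : 0 < INR (p1 + 1)) by (apply lt_0_INR; lia). assert (Hq2 : 0 < INR (p2 + 1)) by (apply lt_0_INR; lia).
    set (F1 := fsum 0 p1 _). set (F2 := fsum 0 p2 _).
    replace (/ INR (p1 + 1) * F1 * (/ INR (p2 + 1) * F2) / (INR n ^ m * (INR n + INR r) ^ 1))
      with (/ (INR (p1 + 1) * INR (p2 + 1)) * / (INR n ^ m * (INR n + INR r) ^ 1) * (F1 * F2)).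
    2: { field. repeat split; try lra. apply pow_nonzero; auto. }
    unfold F1, F2. rewrite fsum_mult. rewrite <- fsum_scal. apply fsum_ext. intros l1 Hl1.
    rewrite <- fsum_scal. apply fsum_ext. intros l2 Hl2. unfold Sterm. rewrite H_zero.
    assert (P : INR n ^ (p1 + 1 - l1) * INR n ^ (p2 + 1 - l2) * INR n ^ (m - p1 - p2 - 1 + l1 + l2) = INR n ^ m * INR n).
    { rewrite Rmult_comm with (r2 := INR n). rewrite tech_pow_Rmult. rewrite <- !pow_add. f_equal. lia. }
    assert (Pa : INR n ^ (p1 + 1 - l1) <> 0) by (apply pow_nonzero; auto).
    assert (Pb : INR n ^ (p2 + 1 - l2) <> 0) by (apply pow_nonzero; auto).
    assert (Pk : INR n ^ (m - p1 - p2 - 1 + l1 + l2) <> 0) by (apply pow_nonzero; auto).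
    set (A1 := INR n ^ (p1 + 1 - l1)) in *. set (B1 := INR n ^ (p2 + 1 - l2)) in *.
    set (K1 := INR n ^ (m - p1 - p2 - 1 + l1 + l2)) in *.
    replace (INR n ^ m) with (A1 * B1 * K1 / INR n) by (rewrite P; field; auto).
    field. repeat split; auto; lra.
  - intros l1 l2 _ _. apply ex_Sterm0; lia.
  - split. exact HA. unfold Tsum. rewrite HB. rewrite <- fsum_scal. apply fsum_ext. intros.
    rewrite <- fsum_scal. apply fsum_ext. intros. unfold Ssum. ring.
Qed.

Definition ff p1 p2 n := H n (Z.of_nat p1) * H n (Z.of_nat p2).
Definition wt p1 p2 b n := Sterm (Z.of_nat p1) p2 1 b n + Sterm (Z.of_nat p2) p1 1 b n - Sterm 0 (p1+p2+1) 1 b n.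
Definition wsum p1 p2 b := Ssum (Z.of_nat p1) p2 1 b + Ssum (Z.of_nat p2) p1 1 b - Ssum 0 (p1+p2+1) 1 b.
Definition dt p1 p2 b n := ff p1 p2 n * (/ (INR n + INR b) - / (INR n + INR b + 1)).

Lemma H_S n p : H (S n) (Z.of_nat p) = H n (Z.of_nat p) + / INR (S n) ^ p.
Proof. rewrite !H_pos_eq. rewrite fsum_Sr by lia. reflexivity. Qed.

Lemma H_0 q : H 0 q = 0.
Proof. unfold H. apply fsum_empty. lia. Qed.

Lemma wt_eq p1 p2 b N : wt p1 p2 b (S N) = (ff p1 p2 (S N) - ff p1 p2 N) / (INR (S N) + INR b).
Proof.
  unfold wt, ff, Sterm. rewrite H_zero.
  assert (E1 := H_S N p1). assert (E2 := H_S N p2).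
  assert (Hx : 0 < INR (S N)) by (apply lt_0_INR; lia). assert (Hb := pos_INR b).
  set (x := INR (S N)) in *.
  rewrite (pow_add x (p1 + p2) 1), (pow_add x p1 p2).
  assert (X1 : x ^ p1 <> 0) by (apply pow_nonzero; lra).
  assert (X2 : x ^ p2 <> 0) by (apply pow_nonzero; lra).
  replace (H N (Z.of_nat p1)) with (H (S N) (Z.of_nat p1) - / x ^ p1) by (rewrite E1; ring).
  replace (H N (Z.of_nat p2)) with (H (S N) (Z.of_nat p2) - / x ^ p2) by (rewrite E2; ring).
  field. repeat split; auto; lra.
Qed.

Lemma abel_partial p1 p2 b M :
  fsum 1 M (dt p1 p2 b) = fsum 1 M (wt p1 p2 b) - ff p1 p2 M / (INR M + INR b + 1).
Proof.
  induction M.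
  - rewrite !fsum_empty by lia. unfold ff. rewrite H_0. unfold Rdiv. ring.
  - rewrite !fsum_Sr by lia. rewrite IHM. rewrite wt_eq. unfold dt.
    assert (Hb := pos_INR b). assert (Hm := pos_INR M).
    rewrite S_INR. field. split; lra.
Qed.

Lemma is_series_wt p1 p2 b : (1 <= p1)%nat -> (1 <= p2)%nat ->
  is_series (fun k => wt p1 p2 b (S k)) (wsum p1 p2 b).
Proof.
  intros. unfold wt, wsum. apply is_series_Rminus. apply is_series_Rplus.
  apply Series_correct, ex_Sterm; lia. apply Series_correct, ex_Sterm; lia.
  apply Series_correct, ex_Sterm0; lia.
Qed.

Lemma ff_lim p1 p2 b : (1 <= p1)%nat -> (1 <= p2)%nat ->
  is_lim_seq (fun N => ff p1 p2 (S N) / (INR (S N) + INR b + 1)) 0.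
Proof.
  intros Q1 Q2.
  apply (is_lim_seq_le_le (fun _ => 0) _ (fun N => 16 * / sqrt (INR (S N)))).
  - intros N. assert (Hb := pos_INR b). assert (Hx : 1 <= INR (S N)) by (apply INR_ge1; lia).
    assert (Hf := HH_bound (S N) p1 p2 Q1 Q2). assert (F0 : 0 <= ff p1 p2 (S N)) by (unfold ff; apply Rmult_le_pos; apply H_nonneg).
    fold (ff p1 p2 (S N)) in Hf.
    assert (Hs := sqrt_sqrt (INR (S N)) ltac:(lra)). assert (Hs1 := sqrt_ge1 _ Hx).
    split. apply Rmult_le_pos; auto. left; apply Rinv_0_lt_compat; lra.
    apply (Rle_trans _ (16 * sqrt (INR (S N)) / (INR (S N)))).
    + unfold Rdiv. apply Rmult_le_compat; auto. left; apply Rinv_0_lt_compat; lra. apply Rinv_le_contravar; lra.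
    + right. rewrite <- Hs at 2. field. lra.
  - apply is_lim_seq_const.
  - replace (Finite 0) with (Rbar_mult 16 0) by (simpl; f_equal; ring). apply is_lim_seq_scal_l. apply lim_inv_sqrt.
Qed.

Lemma abel_series p1 p2 b : (1 <= p1)%nat -> (1 <= p2)%nat ->
  is_series (fun k => dt p1 p2 b (S k)) (wsum p1 p2 b).
Proof.
  intros Q1 Q2.
  assert (HL : is_lim_seq (sum_n (fun k => dt p1 p2 b (S k))) (wsum p1 p2 b)).
  { apply (is_lim_seq_ext (fun N => sum_n (fun k => wt p1 p2 b (S k)) N - ff p1 p2 (S N) / (INR (S N) + INR b + 1))).
    - intros N. rewrite <- !fsum_sum_n. rewrite <- !fsum_shift. rewrite abel_partial. reflexivity.
    - replace (Finite (wsum p1 p2 b)) with (Finite (wsum p1 p2 b - 0)) by (f_equal; ring).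
      apply is_lim_seq_minus'. exact (is_series_wt p1 p2 b Q1 Q2). apply ff_lim; auto. }
  exact HL.
Qed.

Ltac nz := repeat split; try apply pow_nonzero; lra.

Definition vt p1 p2 r n := ff p1 p2 n * (/ INR n - / (INR n + INR r)).

Lemma v_series p1 p2 r : (1 <= p1)%nat -> (1 <= p2)%nat ->
  is_series (fun k => vt p1 p2 (S r) (S k)) (fsum 0 r (wsum p1 p2)).
Proof.
  intros Q1 Q2. induction r.
  - rewrite fsum_single. eapply is_series_Rext. 2: apply abel_series; auto.
    intros k. unfold dt, vt. simpl INR at 2 4. rewrite Rplus_0_r. reflexivity.
  - rewrite fsum_Sr by lia. eapply is_series_Rext. 2: apply is_series_Rplus. 2: exact IHr. 2: apply abel_series; auto.
    intros k. unfold dt, vt. rewrite (S_INR (S r)). rewrite <- (Rplus_assoc (INR (S k))). ring.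
Qed.

Lemma pf m x r : (1 <= m)%nat -> 0 < x -> 0 < r ->
  / (x ^ m * (x + r)) = fsum 1 m (fun i => (-1) ^ (m - i) / r ^ (m - i + 1) / x ^ i) + (-1) ^ m / r ^ m / (x + r).
Proof.
  intros Hm Hx Hr. induction m. lia.
  destruct (Nat.eq_dec m 0).
  - subst. rewrite fsum_single. simpl. field. lra.
  - assert (x ^ m <> 0) by (apply pow_nonzero; lra).
    replace (/ (x ^ S m * (x + r))) with (/ x * / (x ^ m * (x + r))) by (simpl; field; repeat split; lra).
    rewrite IHm by lia. rewrite (fsum_Sl 1 (S m)) by lia. rewrite fsum_shift.
    replace (S m - 1 + 1)%nat with (S m) by lia. replace (S m - 1)%nat with m by lia.
    rewrite (fsum_ext 1 m (fun k => (-1) ^ (S m - S k) / r ^ (S m - S k + 1) / x ^ S k)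
                      (fun k => / x * ((-1) ^ (m - k) / r ^ (m - k + 1) / x ^ k))).
    2: { intros k Hk. replace (S m - S k)%nat with (m - k)%nat by lia. simpl pow at 3. field.
         repeat split; try apply pow_nonzero; lra. }
    rewrite fsum_scal.
    assert (r ^ m <> 0) by (apply pow_nonzero; lra). assert (x ^ m <> 0) by (apply pow_nonzero; lra).
    simpl pow. field. repeat split; lra.
Qed.

Lemma Tterm_decomp p1 p2 m r n : (1 <= m)%nat -> (1 <= r)%nat -> (1 <= n)%nat ->
  Tterm (Z.of_nat p1) (Z.of_nat p2) m 1 r n =
  fsum 2 m (fun i => (-1) ^ (m - i) / INR r ^ (m - i + 1) * (ff p1 p2 n / INR n ^ i))
  + (-1) ^ (m - 1) / INR r ^ m * vt p1 p2 r n.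
Proof.
  intros Hm Hr Hn. unfold Tterm. fold (ff p1 p2 n). rewrite pow_1.
  assert (Hx : 0 < INR n) by (apply lt_0_INR; lia). assert (Hr' : 0 < INR r) by (apply lt_0_INR; lia).
  unfold Rdiv at 1. rewrite pf by auto. rewrite fsum_Sl by lia.
  rewrite (fsum_ext 2 m (fun i => (-1) ^ (m - i) / INR r ^ (m - i + 1) * (ff p1 p2 n / INR n ^ i))
     (fun i => ff p1 p2 n * ((-1) ^ (m - i) / INR r ^ (m - i + 1) / INR n ^ i))).
  2: { intros. unfold Rdiv. ring. }
  rewrite fsum_scal. unfold vt. replace (m - 1 + 1)%nat with m by lia.
  replace ((-1) ^ m) with (- (-1) ^ (m - 1)).
  2: { replace m with (S (m - 1)) at 2 by lia. simpl. ring. }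
  assert (INR r ^ m <> 0) by (apply pow_nonzero; lra).
  simpl pow. field. repeat split; lra.
Qed.

Lemma part1 p1 p2 m r : (1 <= p1)%nat -> (1 <= p2)%nat -> (1 <= m)%nat -> (1 <= r)%nat ->
    let c := (-1) ^ (m - 1) / INR r ^ m in
    ex_sum1 (Tterm (Z.of_nat p1) (Z.of_nat p2) m 1 r) /\
    Tsum (Z.of_nat p1) (Z.of_nat p2) m 1 r =
      fsum 2 m (fun i => (-1) ^ (m - i) / INR r ^ (m - i + 1) * ES3 p1 p2 i)
      + c * (ES2 p1 (p2 + 1) + ES2 p2 (p1 + 1))
      - c * zeta (p1 + p2 + 1)
      + c * fsum 1 (r - 1) (fun b => Ssum (Z.of_nat p1) p2 1 b)
      + c * (fsum 1 (r - 1) (fun b => Ssum (Z.of_nat p2) p1 1 b)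
             - fsum 1 (r - 1) (fun b => Ssum 0 (p1 + p2 + 1) 1 b)).
Proof.
  intros Q1 Q2 Hm Hr c.
  destruct r as [|r']. lia.
  assert (HS : is_series (fun k => Tterm (Z.of_nat p1) (Z.of_nat p2) m 1 (S r') (S k))
     (fsum 2 m (fun i => (-1) ^ (m - i) / INR (S r') ^ (m - i + 1) * ES3 p1 p2 i) + c * fsum 0 r' (wsum p1 p2))).
  { eapply is_series_Rext. intros k. symmetry. apply Tterm_decomp; lia.
    apply is_series_Rplus.
    - apply (is_series_fsum 2 m (fun i k => (-1) ^ (m - i) / INR (S r') ^ (m - i + 1) * (ff p1 p2 (S k) / INR (S k) ^ i))).
      intros i Hi. apply is_series_Rscal. unfold ES3. apply (Series_correct (fun k => ff p1 p2 (S k) / INR (S k) ^ i)).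
      apply (ex_ES3 p1 p2 i); lia.
    - apply is_series_Rscal. apply v_series; auto. }
  split. eexists; exact HS. unfold Tsum, sum1. rewrite (is_series_unique _ _ HS).
  replace (S r' - 1)%nat with r' by lia.
  rewrite (fsum_Sl 0 r') by lia.
  assert (E1 : Ssum (Z.of_nat p1) p2 1 0 = ES2 p1 (p2 + 1)).
  { unfold Ssum, ES2, sum1. apply Series_ext. intros k. unfold Sterm. change (INR 0) with 0. rewrite Rplus_0_r.
    rewrite pow_add. reflexivity. }
  assert (E2 : Ssum (Z.of_nat p2) p1 1 0 = ES2 p2 (p1 + 1)).
  { unfold Ssum, ES2, sum1. apply Series_ext. intros k. unfold Sterm. change (INR 0) with 0. rewrite Rplus_0_r.
    rewrite pow_add. reflexivity. }
  assert (E3 : Ssum 0 (p1 + p2 + 1) 1 0 = zeta (p1 + p2 + 1)).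
  { unfold Ssum, zeta, sum1. apply Series_ext. intros k. unfold Sterm. change (INR 0) with 0. rewrite Rplus_0_r.
    rewrite H_zero. assert (0 < INR (S k)) by (apply lt_0_INR; lia).
    assert (INR (S k) ^ (p1 + p2 + 1) <> 0) by (apply pow_nonzero; lra). rewrite pow_1. set (x := INR (S k)) in *. set (X := x ^ (p1 + p2 + 1)) in *. field. repeat split; auto; lra. }
  unfold wsum at 1. rewrite E1, E2, E3. unfold wsum. rewrite fsum_minus, fsum_plus.
  subst c. set (A1 := fsum 1 r' _). set (A2 := fsum 1 r' _). set (A3 := fsum 1 r' _). set (A4 := fsum 2 m _). lra.
Qed.

Theorem lemma8 :
  (* (i) *)
  (forall p1 p2 m r : nat, (1 <= p1)%nat -> (1 <= p2)%nat -> (1 <= m)%nat -> (1 <= r)%nat ->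
    let c := (-1) ^ (m - 1) / INR r ^ m in
    ex_sum1 (Tterm (Z.of_nat p1) (Z.of_nat p2) m 1 r) /\
    Tsum (Z.of_nat p1) (Z.of_nat p2) m 1 r =
      fsum 2 m (fun i => (-1) ^ (m - i) / INR r ^ (m - i + 1) * ES3 p1 p2 i)
      + c * (ES2 p1 (p2 + 1) + ES2 p2 (p1 + 1))
      - c * zeta (p1 + p2 + 1)
      + c * fsum 1 (r - 1) (fun b => Ssum (Z.of_nat p1) p2 1 b)
      + c * (fsum 1 (r - 1) (fun b => Ssum (Z.of_nat p2) p1 1 b)
             - fsum 1 (r - 1) (fun b => Ssum 0 (p1 + p2 + 1) 1 b)))
  /\
  (* (ii) *)
  (forall p1 p2 m r : nat, (1 <= p1)%nat -> (1 <= m)%nat -> (1 <= r)%nat ->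
    (p2 + 2 <= m)%nat ->
    ex_sum1 (Tterm (Z.of_nat p1) (- Z.of_nat p2) m 1 r) /\
    Tsum (Z.of_nat p1) (- Z.of_nat p2) m 1 r =
      / INR (p2 + 1) *
      fsum 0 p2 (fun l => Binomial.C (p2 + 1) l * Bplus l *
                          Ssum (Z.of_nat p1) (m - p2 - 1 + l) 1 r))
  /\
  (* (iii) *)
  (forall p1 p2 m r : nat, (1 <= m)%nat -> (1 <= r)%nat ->
    (p1 + p2 + 3 <= m)%nat ->
    ex_sum1 (Tterm (- Z.of_nat p1) (- Z.of_nat p2) m 1 r) /\
    Tsum (- Z.of_nat p1) (- Z.of_nat p2) m 1 r =
      / (INR (p1 + 1) * INR (p2 + 1)) *
      fsum 0 p1 (fun l1 => fsum 0 p2 (fun l2 =>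
        Binomial.C (p1 + 1) l1 * Binomial.C (p2 + 1) l2 * Bplus l1 * Bplus l2 *
        Ssum 0 (m - p1 - p2 - 1 + l1 + l2) 1 r))).
Proof.
  split; [|split].
  - exact part1.
  - exact part2.
  - exact part3.
Qed.
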